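(* Let $G=K_n$ with $n\geq 3$, let $g:A\to B$ be a function with $I=g(A)$ and $s=|I|$ satisfying $2<s<n$. If $|g^{-1}(v)|=\frac{n}{s}$ for every $v\in I$, then $fix(F_G)=2(n-s)-1$.
   Context: A set $S\subseteq V(H)$ is a fixing set of a graph $H$ if the only automorphism of $H$ fixing every vertex of $S$ is the identity; $fix(H)$ is the minimum cardinality of a fixing set of $H$. Functigraph: let $G_1,G_2$ be disjoint copies of a connected graph $G$, with $A=V(G_1)$, $B=V(G_2)$, and let $g:A\to B$ be a function. The functigraph $F_G$ has vertex set $A\cup B$ and edge set $E(G_1)\cup E(G_2)\cup\{ug(u):u\in A\}$. *)

(* Defs.v *)
From mathcomp Require Import all_boot all_fingroup.
Set Implicit Arguments. Unset Strict Implicit. Unset Printing Implicit Defensive.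

Definition is_automorphism (T : finType) (e : rel T) (p : {perm T}) : bool :=
  [forall x, forall y, e (p x) (p y) == e x y].

Definition fixing_set (T : finType) (e : rel T) (S : {set T}) : bool :=
  [forall p : {perm T},
     (is_automorphism e p && [forall x in S, p x == x]) ==> (p == 1%g)].

(* fix(H): minimum cardinality of a fixing set (setT is always fixing). *)
Definition fixnum (T : finType) (e : rel T) : nat :=
  \big[minn/#|T|]_(S : {set T} | fixing_set e S) #|S|.

Definition complete_rel (n : nat) : rel 'I_n := fun x y => x != y.

(* Functigraph of (V, e) with respect to g : A -> B, where A = inl copy and
   B = inr copy of V. *)
Definition functigraph (V : finType) (e : rel V) (g : V -> V) : rel (V + V) :=
  fun x y =>
    match x, y with
    | inl a, inl b => e a b
    | inr a, inr b => e a b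
    | inl a, inr b => g a == b
    | inr b, inl a => g a == b
    end.

(* Main.v *)
Require Import Defs.
From mathcomp Require Import all_boot all_fingroup zify.
Set Implicit Arguments. Unset Strict Implicit. Unset Printing Implicit Defensive.

Lemma bigmin_le_seq (I : eqType) (r : seq I) (P : pred I) (F : I -> nat) x j :
  j \in r -> P j -> \big[minn/x]_(i <- r | P i) F i <= F j.
Proof.
elim: r => // a r IH; rewrite in_cons big_cons => /orP [/eqP -> ->|jr Pj].
  exact: geq_minl.
case: (P a); last exact: IH.
by rewrite geq_min IH ?orbT.
Qed.

Lemma bigmin_eq (T : finType) (P : pred T) (F : T -> nat) x m :
  m <= x -> (exists2 j, P j & F j = m) -> (forall i, P i -> m <= F i) ->
  \big[minn/x]_(i | P i) F i = m.
Proof.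
move=> mx [j Pj Fj] H; subst m; apply/eqP; rewrite eqn_leq bigmin_le_seq ?mem_index_enum //=.
elim/big_ind: _ => //.
- by move=> a b ha hb; rewrite leq_min ha hb.

Qed.

Lemma twin_auto (T : finType) (e : rel T) u w :
  (forall z, z != u -> z != w -> e u z = e w z /\ e z u = e z w) ->
  e u w = e w u -> e u u = e w w -> is_automorphism e (tperm u w).
Proof.
move=> Hz Huw Huu; apply/forallP => x; apply/forallP => y; apply/eqP.
case: tpermP => [->|->|/eqP xu /eqP xw]; case: tpermP => [->|->|/eqP yu /eqP yw] //;
  try by [rewrite Huw | rewrite Huu].
- by case: (Hz y yu yw) => -> _.
- by case: (Hz y yu yw) => -> _.
- by case: (Hz x xu xw) => _ ->.
- by case: (Hz x xu xw) => _ ->.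
Qed.

Lemma twin_not_fixing (T : finType) (e : rel T) S u w :
  fixing_set e S -> u != w -> u \notin S -> w \notin S ->
  is_automorphism e (tperm u w) -> False.
Proof.
move=> /forallP/(_ (tperm u w))/implyP H uw uS wS aut.
have: tperm u w == 1%g.
  apply: H; rewrite aut /=; apply/forallP => x; apply/implyP => xS.
  by rewrite tpermD //; apply/eqP => ex; subst x; [rewrite xS in uS | rewrite xS in wS].
by move/eqP/(congr1 (fun p : {perm T} => p u)); rewrite tpermL perm1 => /eqP; rewrite eq_sym (negbTE uw).
Qed.

Lemma lower n (g : 'I_n -> 'I_n) (S : {set 'I_n + 'I_n}) :
  fixing_set (functigraph (@complete_rel n) g) S ->
  2 * (n - #|g @: [set: 'I_n]|) - 1 <= #|S|.
Proof.
move=> fS.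
set I := g @: [set: 'I_n].
set SA := [set a | inl a \in S]; set SB := [set b | inr b \in S].
have injA : {in ~: SA &, injective g}.
  move=> a1 a2; rewrite !inE => a1S a2S ga; apply/eqP/negP => /negP ne.
  apply: (twin_not_fixing fS (u := inl a1) (w := inl a2)) => //.
  apply: twin_auto; rewrite /= /complete_rel ?eqxx 1?[in X in X = _]eq_sym //.
  case=> c; rewrite /complete_rel => /= h1 h2; last by rewrite ga.
  split; apply/idP/idP => _; apply/eqP => ec; subst c;
    by [rewrite eqxx in h1 | rewrite eqxx in h2].
have cA : n - #|I| <= #|SA|.
  have : #|~: SA| <= #|I|.
    rewrite -(card_in_imset injA); apply: subset_leq_card.
    by apply/subsetP => y /imsetP [x _ ->]; apply: imset_f.
  have := cardsC SA; rewrite card_ord; lia.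
have cB : #|~: I :\: SB| <= 1.
  rewrite leqNgt; apply/negP => /card_gt1P [b1 [b2 [h1 h2 ne]]].
  move: h1 h2; rewrite !inE => /andP [b1S b1I] /andP [b2S b2I].
  apply: (twin_not_fixing fS (u := inr b1) (w := inr b2)) => //.
  apply: twin_auto; rewrite /= /complete_rel ?eqxx 1?[in X in X = _]eq_sym //.
  case=> c /= h1 h2; last first.
    rewrite /complete_rel; split; apply/idP/idP => _; apply/eqP => ec; subst c;
    by [rewrite eqxx in h1 | rewrite eqxx in h2].
  have gI : g c \in I by apply: imset_f; rewrite inE.
  split; apply/idP/idP => /eqP ec; rewrite -ec gI in b1I b2I; by [].
have cB2 : n - #|I| - 1 <= #|SB :&: ~: I|.
  have := cardsC I; move: cB; rewrite cardsD card_ord [~: I :&: _]setIC; lia.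
have : #|inl @: SA :|: inr @: (SB :&: ~: I)| <= #|S|.
  apply: subset_leq_card; apply/subsetP => x; rewrite inE => /orP [] /imsetP [y].
    by rewrite inE => ? ->.
  by rewrite !inE => /andP [? _] ->.
have inlI : injective (@inl 'I_n 'I_n) by move=> ? ? [->].
have inrI : injective (@inr 'I_n 'I_n) by move=> ? ? [->].
rewrite cardsU (card_imset _ inlI) (card_imset _ inrI).
have -> : inl @: SA :&: inr @: (SB :&: ~: I) = set0.
  apply/setP => x; rewrite !inE; apply/negP => /andP [/imsetP [y _ ->] /imsetP [z _]] //.
rewrite cards0; lia.
Qed.

Lemma upper n (g : 'I_n -> 'I_n) :
  let I := [set g a | a in [set: 'I_n]] in
  let s := #|I| in
  2 < s -> s < n ->
  (forall v, v \in I -> #|g @^-1: [set v]| * s = n) ->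
  exists2 S : {set 'I_n + 'I_n}, fixing_set (functigraph (@complete_rel n) g) S
     & #|S| = 2 * (n - s) - 1.
Proof.
move=> I s hs hsn hk.
pose h v := odflt v [pick a | g a == v].
have hg : forall v, v \in I -> g (h v) = v.
  move=> v /imsetP [a _ ->]; rewrite /h; case: pickP => [x /eqP //|/(_ a)].
  by rewrite eqxx.
pose M := h @: I.
have cM : #|M| = s.
  by apply: card_in_imset => v1 v2 i1 i2 e; rewrite -(hg v1 i1) -(hg v2 i2) e.
have Mfib : forall a a', a \in M -> a' \in M -> g a = g a' -> a = a'.
  move=> a a' /imsetP [v vI ->] /imsetP [v' vI' ->].
  by rewrite (hg v vI) (hg v' vI') => ->.
have fiberS : forall v, v \in I -> exists2 x, g x = v & x \notin M.
  move=> v vI; have := hk v vI => hkv.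
  have : 1 < #|g @^-1: [set v]| by nia.
  move/card_gt1P => [x [y [hx hy ne]]]; move: hx hy; rewrite !inE => /eqP gx /eqP gy.
  case xM: (x \in M); last by exists x; rewrite ?xM.
  case yM: (y \in M); last by exists y; rewrite ?yM.
  by rewrite (Mfib x y xM yM) ?gx ?gy ?eqxx in ne.
have two : forall v, exists x1 x2, [/\ x1 \notin M, x2 \notin M, g x1 != g x2,
    g x1 != v & g x2 != v].
  move=> v; have : 1 < #|I :\ v| by have := cardsD1 v I; rewrite -/s; case: (v \in I) => /=; lia.
  move/card_gt1P => [v1 [v2 []]]; rewrite !inE => /andP [n1 i1] /andP [n2 i2] ne.
  have [x1 g1 m1] := fiberS v1 i1; have [x2 g2 m2] := fiberS v2 i2.
  by exists x1, x2; rewrite g1 g2.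
have [b0 b0I] : exists b0, b0 \in ~: I.
  by apply/card_gt0P; have := cardsC I; rewrite card_ord -/s; lia.
pose S0 := inl @: (~: M) :|: inr @: (~: I :\ b0).
have inlI : injective (@inl 'I_n 'I_n) by move=> ? ? [->].
have inrI : injective (@inr 'I_n 'I_n) by move=> ? ? [->].
have S0l : forall a, (inl a \in S0) = (a \notin M).
  move=> a; rewrite inE (mem_imset _ _ inlI) inE; apply/orP/idP => [[//|/imsetP [? _ //]]|->]; by left.
have S0r : forall b, (inr b \in S0) = (b \notin I) && (b != b0).
  move=> b; rewrite inE (mem_imset _ _ inrI) !inE andbC; apply/orP/idP => [[/imsetP [? _ //]|//]|->]; by right.
exists S0; last first.
  rewrite cardsU (card_imset _ inlI) (card_imset _ inrI).
  have -> : inl @: (~: M) :&: inr @: (~: I :\ b0) = set0.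
    apply/setP => x; rewrite !inE; apply/negP => /andP [/imsetP [y _ ->] /imsetP [z _]] //.
  have := cardsD1 b0 (~: I); rewrite b0I.
  have := cardsC I; have := cardsC M; rewrite cards0 card_ord -/s cM; lia.
apply/forallP => p; apply/implyP => /andP [aut /forallP fx].
have autE : forall x y, functigraph (@complete_rel n) g (p x) (p y) =
                        functigraph (@complete_rel n) g x y.
  by move=> x y; apply/eqP; move/forallP: aut => /(_ x) /forallP /(_ y).
have fxS : forall x, x \in S0 -> p x = x by move=> x xS; apply/eqP; exact: (implyP (fx x)).
have fixA : forall a, a \notin M -> p (inl a) = inl a by move=> a aM; apply: fxS; rewrite S0l.
have step1 : forall v, v \in I -> p (inr v) = inr v.
  move=> v vI; have [x gx xM] := fiberS v vI.
  have [x1 [x2 [m1 m2 ne n1 n2]]] := two v.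
  have h0 := autE (inr v) (inl x); have h1 := autE (inr v) (inl x1);
  have h2 := autE (inr v) (inl x2).
  rewrite fixA // in h0; rewrite fixA // in h1; rewrite fixA // in h2.
  move: h0 h1 h2; case: (p (inr v)) => [a|b] /=; rewrite /complete_rel.
    rewrite (negbTE n1) (negbTE n2) => _ /negbFE/eqP -> /negbFE/eqP e2.
    by rewrite e2 eqxx in ne.
  by rewrite gx eqxx => /eqP ->.
have step2 : forall a, p (inl a) = inl a.
  move=> a; case aM: (a \in M); last by rewrite fixA ?aM.
  have [x1 [x2 [m1 m2 ne n1 n2]]] := two (g a).
  have h1 := autE (inl a) (inl x1); have h2 := autE (inl a) (inl x2).
  have h3 := autE (inl a) (inr (g a)).
  rewrite (fixA x1 m1) in h1; rewrite (fixA x2 m2) in h2.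
  rewrite step1 ?imset_f ?inE // in h3.
  move: h1 h2 h3; case E: (p (inl a)) => [a'|b] /=; rewrite /complete_rel eqxx.
    move=> _ _ /eqP ga.
    case a'M: (a' \in M); first by rewrite (Mfib a' a).
    have : p (inl a) = p (inl a') by rewrite E fixA ?a'M.
    by move/perm_inj => [->].
  have ax1 : a != x1 by apply/eqP => ea; rewrite -ea aM in m1.
  have ax2 : a != x2 by apply/eqP => ea; rewrite -ea aM in m2.
  by rewrite ax1 ax2 => /eqP e1 /eqP e2; rewrite e1 e2 eqxx in ne.
have fixo : forall x, x != inr b0 -> p x = x.
  case=> [a _|b nb]; first exact: step2.
  case bI: (b \in I); first exact: step1.
  by apply: fxS; rewrite S0r bI; apply/eqP => eb; rewrite eb eqxx in nb.
apply/eqP/permP => x; rewrite perm1.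
case xb: (x == inr b0); last by apply: fixo; rewrite xb.
move/eqP: xb => ->; case pb: (p (inr b0) == inr b0); first exact/eqP.
by have := fixo _ (negbT pb) => /perm_inj.
Qed.

Theorem corollary3p4 (n : nat) (g : 'I_n -> 'I_n) :
  3 <= n ->
  let I := [set g a | a in [set: 'I_n]] in
  let s := #|I| in
  2 < s -> s < n ->
  (forall v, v \in I -> #|g @^-1: [set v]| * s = n) ->
  fixnum (functigraph (@complete_rel n) g) = 2 * (n - s) - 1.
Proof.
move=> _ I s hs hsn hk; rewrite /fixnum; apply: bigmin_eq.
- by rewrite card_sum card_ord; lia.
- by have [S fS cS] := upper hs hsn hk; exists S.
- by move=> S fS; apply: lower.
Qed.
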